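(* Let $\mathcal{M}=(S,A,\delta)$ be a finite fuzzy transition system and let $\gamma=1$. Then $d^1_f(s,t)\in\Theta_{\mathcal{M}}$ for all $s,t\in S$.
   Context: A fuzzy set on a finite set $X$ is a map $\mu:X\to[0,1]$; $\mathcal{F}(X)$ is the set of fuzzy sets on $X$ and $\mathcal{P}(X)$ the power set; $\mu(U)=\max_{x\in U}\mu(x)$. A fuzzy transition system is $\mathcal{M}=(S,A,\delta)$ with $S,A$ finite and $\delta:S\times A\to\mathcal{P}(\mathcal{F}(S))$, each $\delta(s,a)$ finite. $\Theta_{\mathcal{M}}$ is the set of all membership degrees $\mu(u)$ with $u\in S$ and $\mu\in\delta(s,a)$ for some $s\in S,a\in A$, together with $0$ and $1$. $\mathcal{D}(S)$ is the set of pseudo-ultrametrics $d:S\times S\to[0,1]$ ($d(x,x)=0$, symmetric, $d(x,z)\le\max(d(x,y),d(y,z))$), ordered pointwise by $\preceq$. Lifting: for $\mu,\eta\in\mathcal{F}(S)$, $\hat d(\mu,\eta)=1$ if $\mu(S)\ne\eta(S)$, and otherwise $\hat d(\mu,\eta)$ is the minimum of $\max_{u,v}\min(d(u,v),x_{uv})$ over all $x_{uv}\ge0$ with $\max_v x_{uv}=\mu(u)$ for all $u$ and $\max_u x_{uv}=\eta(v)$ for all $v$. For $\mu$ and finite $Z\subseteq\mathcal{F}(S)$: $\hat d(\mu,Z)=\min_{\eta\in Z}\hat d(\mu,\eta)$ if $Z\neq\emptyset$, else $1$. Hausdorff distance: $H_{\hat d}(\emptyset,\emptyset)=0$, otherwise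 $H_{\hat d}(Y,Z)=\max\big(\max_{\mu\in Y}\hat d(\mu,Z),\max_{\eta\in Z}\hat d(\eta,Y)\big)$. For a discounting factor $\gamma\in(0,1]$, the functional $\Delta:\mathcal{D}(S)\to\mathcal{D}(S)$ is $\Delta(d)(s,t)=\gamma\cdot\max_{a\in A}H_{\hat d}(\delta(s,a),\delta(t,a))$; it is monotone, and $d^\gamma_f$ denotes its least fixpoint. *)

(* Defs.v *)
From HB Require Import structures.
From mathcomp Require Import all_boot all_order all_algebra.
From mathcomp Require Import classical_sets reals.
Set Implicit Arguments. Unset Strict Implicit. Unset Printing Implicit Defensive.
Import Order.TTheory GRing.Theory Num.Theory.
Local Open Scope ring_scope.
Local Open Scope classical_set_scope.

Section FTS.
Variables (R : realType) (S A : finType).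

(* fuzzy sets on S (values in [0,1] imposed as a hypothesis where needed) *)
Definition fuzzy := {ffun S -> R}.

Definition fheight (mu : fuzzy) : R := \big[Num.max/0]_(u : S) mu u.

Definition coupling (mu eta : fuzzy) (x : S -> S -> R) : Prop :=
  (forall u v, 0 <= x u v) /\
  (forall u, \big[Num.max/0]_(v : S) x u v = mu u) /\
  (forall v, \big[Num.max/0]_(u : S) x u v = eta v).

Definition coupling_cost (d : S -> S -> R) (x : S -> S -> R) : R :=
  \big[Num.max/0]_(p : S * S) Num.min (d p.1 p.2) (x p.1 p.2).

(* lifting \hat d; the minimum (attained) is written as the infimum *)
Definition lift (d : S -> S -> R) (mu eta : fuzzy) : R :=
  if fheight mu != fheight eta then 1
  else inf [set c | exists x, coupling mu eta x /\ c = coupling_cost d x].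

Definition lift_set (d : S -> S -> R) (mu : fuzzy) (Z : seq fuzzy) : R :=
  match Z with
  | [::] => 1
  | eta0 :: Z' => \big[Num.min/lift d mu eta0]_(eta <- Z') lift d mu eta
  end.

Definition hausdorff (d : S -> S -> R) (Y Z : seq fuzzy) : R :=
  if (Y == [::]) && (Z == [::]) then 0
  else Num.max (\big[Num.max/0]_(mu <- Y) lift_set d mu Z)
               (\big[Num.max/0]_(eta <- Z) lift_set d eta Y).

Definition is_pum (d : S -> S -> R) : Prop :=
  (forall x y, 0 <= d x y <= 1) /\
  (forall x, d x x = 0) /\
  (forall x y, d x y = d y x) /\
  (forall x y z, d x z <= Num.max (d x y) (d y z)).

Definition Delta (delta : S -> A -> seq fuzzy) (gamma : R)
  (d : S -> S -> R) : S -> S -> R :=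
  fun s t => gamma * \big[Num.max/0]_(a : A) hausdorff d (delta s a) (delta t a).

Definition is_least_fixpoint (delta : S -> A -> seq fuzzy) (gamma : R)
  (d : S -> S -> R) : Prop :=
  is_pum d /\ (forall s t, Delta delta gamma d s t = d s t) /\
  (forall d', is_pum d' -> (forall s t, Delta delta gamma d' s t = d' s t) ->
     forall s t, d s t <= d' s t).

Definition Theta (delta : S -> A -> seq fuzzy) : set R :=
  [set r | r = 0 \/ r = 1 \/
     exists s a mu u, mu \in delta s a /\ r = mu u].

End FTS.

(* Main.v *)
Require Import Defs.
From HB Require Import structures.
From mathcomp Require Import all_boot all_order all_algebra.
From mathcomp Require Import classical_sets reals.
Import Order.TTheory GRing.Theory Num.Theory.
Local Open Scope ring_scope.
Local Open Scope classical_set_scope.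

Section Proof.
Variables (R : realType) (S A : finType) (delta : S -> A -> seq (fuzzy R S)).

Definition thetas : seq R := 0 :: 1 ::
  [seq mu u | mu : fuzzy R S <- flatten (map (fun p : S * A => delta p.1 p.2) (enum {: S * A})),
              u : S <- enum S].

Lemma theta_mem s a mu u : mu \in delta s a -> mu u \in thetas.
Proof.
move=> Hmu; rewrite !inE; apply/orP; right; apply/orP; right.
apply/allpairsP; exists (mu, u) => /=; split => //; last by rewrite mem_enum.
apply/flattenP; exists (delta s a) => //.
by apply/mapP; exists (s, a); rewrite ?mem_enum.
Qed.

Lemma theta_in x : x \in thetas -> Theta delta x.
Proof.
rewrite !inE => /orP[/eqP->|/orP[/eqP->|/allpairsP[[mu u] [/= Hmu _ ->]]]].
- by left.
- by right; left.
- move/flattenP: Hmu => [s0 /mapP[p _ ->] Hmu].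
  by right; right; exists p.1, p.2, mu, u.
Qed.

Definition rnd (x : R) : R := \big[Num.max/0]_(th <- thetas | th <= x) th.

Lemma rnd_ge0 x : 0 <= rnd x.
Proof. exact: bigmax_ge_id. Qed.

Lemma rnd_le x : 0 <= x -> rnd x <= x.
Proof. by move=> hx; apply: bigmax_le. Qed.

Lemma rnd_mono x y : x <= y -> rnd x <= rnd y.
Proof.
move=> hxy; rewrite /rnd big_seq_cond; apply: bigmax_le; first exact: rnd_ge0.
move=> i /andP[Hi Hix]; apply: le_bigmax_seq => //; exact: le_trans Hix hxy.
Qed.

Arguments rnd_mono {x y}.

Lemma rnd_id th : th \in thetas -> 0 <= th -> rnd th = th.
Proof.
move=> Hi H0; apply/le_anti; rewrite rnd_le //=.
rewrite /rnd; have := @le_bigmax_seq _ R _ thetas 0 th (fun t => t <= th) (fun t => t) Hi (lexx th); exact.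
Qed.

Lemma bigmax_in (x0 : R) (s : seq R) (P : pred R) :
  \big[Num.max/x0]_(i <- s | P i) i \in x0 :: s.
Proof.
elim: s => [|h t IH]; first by rewrite big_nil mem_head.
rewrite big_cons; case: ifP => _; last first.
  by move: IH; rewrite !inE => /orP[->|->]; rewrite ?orbT.
rewrite maxEle; case: ifP => _; last by rewrite !inE eqxx orbT.
by move: IH; rewrite !inE => /orP[->|->]; rewrite ?orbT.
Qed.

Lemma zero_in : (0 : R) \in thetas.
Proof. by rewrite inE eqxx. Qed.

Lemma one_in : (1 : R) \in thetas.
Proof. by rewrite !inE eqxx orbT. Qed.

Lemma rnd_in x : rnd x \in thetas.
Proof.
have := bigmax_in 0 thetas (fun th => th <= x).
by rewrite /rnd inE => /orP[/eqP->|//]; exact: zero_in.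
Qed.

Lemma rnd_idem x : rnd (rnd x) = rnd x.
Proof. exact: rnd_id (rnd_in x) (rnd_ge0 x). Qed.

Lemma rnd0 : rnd 0 = 0.
Proof. exact: rnd_id zero_in (lexx 0). Qed.

Lemma rnd1 : rnd 1 = 1.
Proof. exact: rnd_id one_in ler01. Qed.

Lemma rnd_max x y : rnd (Num.max x y) = Num.max (rnd x) (rnd y).
Proof.
case: (leP x y) => h.
  by rewrite (max_r (rnd_mono h)).
by rewrite (max_l (rnd_mono (ltW h))).
Qed.

Lemma rnd_min x y : rnd (Num.min x y) = Num.min (rnd x) (rnd y).
Proof.
case: (leP x y) => h.
  by rewrite (min_l (rnd_mono h)).
by rewrite (min_r (rnd_mono (ltW h))).
Qed.

Definition good (mu : fuzzy R S) := forall u, mu u \in thetas /\ 0 <= mu u.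

Definition rf (x : S -> S -> R) := fun u v => rnd (x u v).

Lemma coupling_rnd mu eta (x : S -> S -> R) : good mu -> good eta -> coupling mu eta x ->
  coupling mu eta (rf x).
Proof.
move=> gm ge [H0 [H1 H2]]; split; first by move=> u v; exact: rnd_ge0.
split.
- move=> u; rewrite /rf -(big_morph rnd rnd_max rnd0) H1.
  by case: (gm u) => ??; exact: rnd_id.
- move=> v; rewrite /rf -(big_morph rnd rnd_max rnd0) H2.
  by case: (ge v) => ??; exact: rnd_id.
Qed.

Lemma cost_ge0 (d x : S -> S -> R) : 0 <= coupling_cost d x.
Proof. exact: bigmax_ge_id. Qed.

Lemma cost_le (d d' x x' : S -> S -> R) : (forall u v, d u v <= d' u v) ->
  (forall u v, x u v <= x' u v) -> coupling_cost d x <= coupling_cost d' x'.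
Proof.
move=> hd hx; rewrite /coupling_cost; apply: le_bigmax2 => p _.
exact: le_min2.
Qed.

Lemma cost_rnd (d x : S -> S -> R) :
  coupling_cost (rf d) (rf x) = rnd (coupling_cost d (rf x)).
Proof.
rewrite /coupling_cost (big_morph rnd rnd_max rnd0); apply: eq_bigr => p _.
by rewrite rnd_min /rf rnd_idem.
Qed.

Lemma exists_coupling (mu eta : fuzzy R S) : (forall u, 0 <= mu u) ->
  (forall v, 0 <= eta v) -> fheight mu = fheight eta ->
  exists x, coupling mu eta x.
Proof.
move=> hm he hh; exists (fun u v => Num.min (mu u) (eta v)).
split; first by move=> u v; rewrite le_min hm he.
split.
- move=> u; apply/le_anti; rewrite bigmax_le //=; last first.
    by move=> v _; rewrite ge_min lexx.
  have : mu u <= fheight eta by rewrite -hh /fheight; exact: le_bigmax.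
  rewrite /fheight; have [v0 _ ->] := @eq_bigmax _ _ _ 0 u xpredT eta isT (fun i _ => he i).
  move=> hv0; apply: (le_trans _ (le_bigmax _ _ v0)).
  by rewrite le_min lexx hv0.
- move=> v; apply/le_anti; rewrite bigmax_le //=; last first.
    by move=> u _; rewrite ge_min lexx orbT.
  have : eta v <= fheight mu by rewrite hh /fheight; exact: le_bigmax.
  rewrite /fheight; have [u0 _ ->] := @eq_bigmax _ _ _ 0 v xpredT mu isT (fun i _ => hm i).
  move=> hu0; apply: (le_trans _ (le_bigmax _ _ u0)).
  by rewrite le_min lexx hu0.
Qed.

Lemma lift_rnd (d : S -> S -> R) mu eta : good mu -> good eta ->
  Defs.lift (rf d) mu eta = rnd (Defs.lift d mu eta).
Proof.
move=> gm ge; rewrite /Defs.lift; case: ifP => [_|/negbFE/eqP hh]; first by rewrite rnd1.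
set C := [set c | exists x, coupling mu eta x /\ c = coupling_cost d x].
set C' := [set c | exists x, coupling mu eta x /\ c = coupling_cost (rf d) x].
have [x0 hx0] : exists x, coupling mu eta x.
  by apply: exists_coupling => // u; [case: (gm u) | case: (ge u)].
have neC : C !=set0 by exists (coupling_cost d x0), x0.
have neC' : C' !=set0 by exists (coupling_cost (rf d) x0), x0.
have lbC : has_lbound C by exists 0 => c [x [_ ->]]; exact: cost_ge0.
have lbC' : has_lbound C' by exists 0 => c [x [_ ->]]; exact: cost_ge0.
set m := inf C.
apply/le_anti/andP; split; last first.
  apply: lb_le_inf => // c [x [hx ->]].
  apply: (le_trans _ (cost_le (rf d) (rf d) (rf x) x (fun _ _ => lexx _) _)); last first.
    by move=> u v; apply: rnd_le; case: hx => ? _.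
  rewrite cost_rnd; apply: rnd_mono; apply: ge_inf => //.
  by exists (rf x); split => //; exact: coupling_rnd.
set up := \big[Num.min/m + 1]_(th <- thetas | m < th) th.
have mup : m < up.
  by rewrite /up; elim/big_ind: _ => //; [rewrite ltrDl ltr01 | move=> a b ha hb; rewrite lt_min ha hb].
have [y [x [hx ->]] hy] := inf_lt neC mup.
have hrx : coupling mu eta (rf x) by exact: coupling_rnd.
apply: (le_trans (ge_inf lbC' _)); first by exists (rf x).
rewrite cost_rnd; apply: (le_trans (rnd_mono (cost_le d d (rf x) x (fun _ _ => lexx _) _))).
  by move=> u v; apply: rnd_le; case: hx => ? _.
rewrite /rnd big_seq_cond; apply: bigmax_le; first exact: rnd_ge0.
move=> th /andP[hin hth]; apply: (le_trans _ (@le_bigmax_seq _ R _ thetas 0 th (fun t => t <= m) (fun t => t) hin _)) => //.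
rewrite leNgt; apply/negP => hlt.
have : up <= th by rewrite /up; apply: ge_bigmin_seq.
by move=> hup; have := le_lt_trans hup (le_lt_trans hth hy); rewrite ltxx.
Qed.

Lemma lift_set_rnd (d : S -> S -> R) mu Z : good mu ->
  (forall eta, eta \in Z -> good eta) ->
  lift_set (rf d) mu Z = rnd (lift_set d mu Z).
Proof.
move=> gm gZ; case: Z gZ => [|e0 Z'] gZ /=; first by rewrite rnd1.
rewrite (big_morph rnd rnd_min (esym (lift_rnd d mu e0 gm (gZ e0 (mem_head _ _))))).
rewrite big_seq [RHS]big_seq; apply: eq_bigr => eta he.
by apply: lift_rnd => //; apply: gZ; rewrite inE he orbT.
Qed.

Lemma hausdorff_rnd (d : S -> S -> R) Y Z : (forall mu, mu \in Y -> good mu) ->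
  (forall eta, eta \in Z -> good eta) ->
  hausdorff (rf d) Y Z = rnd (hausdorff d Y Z).
Proof.
move=> gY gZ; rewrite /hausdorff; case: ifP => _; first by rewrite rnd0.
rewrite rnd_max !(big_morph rnd rnd_max rnd0).
congr Num.max.
- rewrite big_seq [RHS]big_seq; apply: eq_bigr => mu hm.
  exact: lift_set_rnd (gY mu hm) gZ.
- rewrite big_seq [RHS]big_seq; apply: eq_bigr => mu hm.
  exact: lift_set_rnd (gZ mu hm) gY.
Qed.

Lemma Delta_rnd (Hdelta : forall s a mu, mu \in delta s a -> forall u, 0 <= mu u <= 1)
  (d : S -> S -> R) s t :
  Delta delta 1 (rf d) s t = rnd (Delta delta 1 d s t).
Proof.
have gd : forall s a mu, mu \in delta s a -> good mu.
  move=> s0 a mu hm u; split; first exact: theta_mem hm.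
  by case/andP: (Hdelta _ _ _ hm u).
rewrite /Delta !mul1r (big_morph rnd rnd_max rnd0); apply: eq_bigr => a _.
by apply: hausdorff_rnd => mu hm; apply: gd hm.
Qed.

Lemma main_sec (Hdelta : forall s a mu, mu \in delta s a -> forall u, 0 <= mu u <= 1)
  (d : S -> S -> R) (Hd : is_least_fixpoint delta 1 d) :
  forall s t, Theta delta (d s t).
Proof.
move=> s t; case: Hd => [[Hb [H0 [Hs Hu]]] [Hfix Hleast]].
have pum' : is_pum (rf d).
  split; [|split; [|split]].
  - move=> x y; rewrite /rf rnd_ge0 /=; case/andP: (Hb x y) => h0 h1.
    exact: le_trans (rnd_le _ h0) h1.
  - by move=> x; rewrite /rf H0 rnd0.
  - by move=> x y; rewrite /rf Hs.
  - move=> x y z; rewrite /rf -rnd_max; exact: rnd_mono.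
have fix' : forall s t, Delta delta 1 (rf d) s t = rf d s t.
  by move=> s0 t0; rewrite Delta_rnd // Hfix.
have h1 := Hleast _ pum' fix' s t.
have h2 : rf d s t <= d s t by apply: rnd_le; case/andP: (Hb s t).
have -> : d s t = rf d s t by apply/le_anti; rewrite h1 h2.
exact: theta_in (rnd_in _).
Qed.

End Proof.

Theorem lemma4 (R : realType) (S A : finType) (delta : S -> A -> seq (fuzzy R S))
  (Hdelta : forall s a mu, mu \in delta s a -> forall u, 0 <= mu u <= 1)
  (d : S -> S -> R) (Hd : is_least_fixpoint delta 1 d) :
  forall s t, Theta delta (d s t).
Proof. exact: main_sec Hdelta d Hd. Qed.
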